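(* Let $B$ be a commutative ring with identity, $A$ a dense subring of $B$, and $M$ a maximal ideal of $B$. Then there is no prime ideal $P$ of $B$ such that $M\cap A\subsetneq P\cap A$.
   Context: All rings are commutative with identity; subrings contain the identity. A subring $A$ of $B$ is dense in $B$ if for every ideal $I$ of $B$ and every $b\in B\setminus \operatorname{rad}(I)$ there exists $a\in B\setminus\operatorname{rad}(I)$ with $ab\in A$. *)

(* Defs.v *)
From mathcomp Require Import all_boot all_algebra.
Set Implicit Arguments. Unset Strict Implicit. Unset Printing Implicit Defensive.
Import GRing.Theory.
Local Open Scope ring_scope.

Definition is_ideal (B : comPzRingType) (I : B -> Prop) : Prop :=
  [/\ I 0,
      (forall x y, I x -> I y -> I (x + y)) &
      (forall r x, I x -> I (r * x))].

Definition rad (B : comPzRingType) (I : B -> Prop) : B -> Prop :=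
  fun x => exists n : nat, I (x ^+ n).

Definition is_prime_ideal (B : comPzRingType) (P : B -> Prop) : Prop :=
  [/\ is_ideal P, ~ P 1 & (forall x y, P (x * y) -> P x \/ P y)].

Definition is_maximal_ideal (B : comPzRingType) (M : B -> Prop) : Prop :=
  [/\ is_ideal M, ~ M 1 &
      (forall J : B -> Prop, is_ideal J -> (forall x, M x -> J x) ->
         J 1 \/ (forall x, J x -> M x))].

Definition is_subring (B : comPzRingType) (A : B -> Prop) : Prop :=
  [/\ A 1,
      (forall x y, A x -> A y -> A (x - y)) &
      (forall x y, A x -> A y -> A (x * y))].

Definition is_dense (B : comPzRingType) (A : B -> Prop) : Prop :=
  forall I : B -> Prop, is_ideal I ->
    forall b, ~ rad I b -> exists a, ~ rad I a /\ A (a * b).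

(* Main.v *)
From Pilot Require Import Defs.
From mathcomp Require Import all_boot all_algebra.
Local Open Scope ring_scope.
Import GRing.Theory.

Lemma prime_rad (B : comPzRingType) (P : B -> Prop) :
  is_prime_ideal P -> forall y, Pilot.Defs.rad P y -> P y.
Proof.
case=> _ P1 Pp y [n]; elim: n => [|n IH]; first by rewrite expr0.
by rewrite exprS => /Pp [].
Qed.

Theorem corollary4p3 (B : comPzRingType) (A M : B -> Prop) :
  is_subring A -> is_dense A -> is_maximal_ideal M ->
  ~ (exists P : B -> Prop, is_prime_ideal P /\
       (forall x, M x /\ A x -> P x /\ A x) /\
       (exists x, (P x /\ A x) /\ ~ (M x /\ A x))).
Proof.
move=> _ Hd [[M0 MD MM] M1 Mmax] [P [HP [Hsub [x0 [[Px0 Ax0] nMx0]]]]].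
have HP' := HP; case: HP' => [[P0 PD PM] P1 Pp].
pose J := fun x => exists m b, M m /\ x = m + b * x0.
have HJ : is_ideal J.
  split.
  - by exists 0, 0; rewrite mul0r addr0.
  - move=> x y [m [b [Mm ->]]] [m' [b' [Mm' ->]]].
    exists (m + m'), (b + b'); split; first exact: MD.
    by rewrite mulrDl addrACA.
  - move=> r x [m [b [Mm ->]]]; exists (r * m), (r * b); split; first exact: MM.
    by rewrite mulrDr mulrA.
have MJ : forall x, M x -> J x by move=> x Mx; exists x, 0; rewrite mul0r addr0.
case: (Mmax J HJ MJ) => [[m [b [Mm E]]] | JM]; last first.
  apply: nMx0; split=> //; apply: JM; exists 0, 1; by rewrite add0r mul1r.
have nPm : ~ P m.
  move=> Pm; apply: P1; rewrite E; apply: PD => //; exact: PM.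
have [a [nra Aam]] : exists a, ~ Pilot.Defs.rad P a /\ A (a * m).
  apply: Hd; first by case: HP.
  by move=> /(@prime_rad _ _ HP).
have [Pam _] := Hsub (a * m) (conj (MM a m Mm) Aam).
case: (Pp _ _ Pam) => // Pa; apply: nra; exists 1%N; by rewrite expr1.
Qed.
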